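(* For every positive integer $k$, as formal power series in $q$, $$\sum_{n\ge 1}\mathrm{spt}k_d(n)\,q^n=P_k(q)\,(-q;q)_\infty+(-1)^k (q;q)_{k-1},$$ where the polynomials $P_k(q)$ are defined by $P_1(q)=1$ and $P_k(q)=(q^{k-1}-1)P_{k-1}(q)+q^{k-1}$ for $k>1$.
   Context: For a partition $\pi$, $s(\pi)$ denotes its smallest part. $\mathrm{Spt}k_d(n)$ is the set of partitions $\pi$ of $n$ in which the smallest part $s(\pi)$ occurs exactly $k$ times and all remaining parts (those larger than $s(\pi)$) are pairwise distinct; $\mathrm{spt}k_d(n)=|\mathrm{Spt}k_d(n)|$. Notation: $(a;q)_0=1$, $(a;q)_n=\prod_{j=0}^{n-1}(1-aq^j)$, $(a;q)_\infty=\prod_{j\ge 0}(1-aq^j)$. *)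

(* Defs.v *)
From HB Require Import structures.
From mathcomp Require Import all_boot all_order all_algebra.
Set Implicit Arguments. Unset Strict Implicit. Unset Printing Implicit Defensive.
Import Order.TTheory GRing.Theory Num.Theory.

(* A partition of n is encoded by its multiplicity function:
   m i = number of occurrences of the part (i+1), for i < n.
   (Each multiplicity is at most n, so 'I_n.+1 suffices.) *)
Definition mults (n : nat) := {ffun 'I_n -> 'I_n.+1}.

Definition weight (n : nat) (m : mults n) : nat := \sum_(i < n) (i.+1 * m i).

Definition is_smallest (n : nat) (m : mults n) (s : 'I_n) : bool :=
  (0 < m s) && [forall j : 'I_n, (j < s) ==> (m j == 0 :> nat)].

Definition Sptkd (k n : nat) : {set mults n} :=
  [set m : mults n | (weight m == n) &&
     [exists s : 'I_n, [&& is_smallest m s, (m s == k :> nat) &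
        [forall j : 'I_n, (s < j) ==> (m j <= 1)]]]].

Definition sptkd (k n : nat) : nat := #|Sptkd k n|.

Local Open Scope ring_scope.

Fixpoint Ppoly (k : nat) : {poly int} :=
  match k with
  | 0 => 0
  | k'.+1 => if k' == 0%N then 1 else ('X^k' - 1) * Ppoly k' + 'X^k'
  end.

Definition qq_poch (n : nat) : {poly int} := \prod_(j < n) (1 - 'X^(j.+1)).

(* (-q;q)_N = prod_{j=1}^{N} (1 + q^j); its coefficient of q^n agrees with
   that of the infinite product (-q;q)_oo as soon as N >= n. *)
Definition mq_poch (N : nat) : {poly int} := \prod_(j < N) (1 + 'X^(j.+1)).

(* Main.v *)
Require Import Defs.
From mathcomp Require Import all_boot all_order all_algebra ring.
Import GRing.Theory.


Definition ok (k s i j : nat) : bool :=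
  if (i < s)%N then j == 0%N else if i == s then j == k else (j <= 1)%N.

Definition Aset (k n : nat) (s : 'I_n) : {set mults n} :=
  [set f : mults n | (weight f == n) && [forall i : 'I_n, ok k s i (f i)]].

Lemma cond_eq (k n : nat) (hk : (0 < k)%N) (f : mults n) (s : 'I_n) :
  [&& is_smallest f s, (f s == k :> nat) & [forall j : 'I_n, (s < j) ==> (f j <= 1)]]
  = [forall i : 'I_n, ok k s i (f i)].
Proof.
apply/idP/idP.
- case/and3P => /andP[h1 /forallP h2] h3 /forallP h4.
  apply/forallP => i; rewrite /ok.
  case: (ltngtP i s) => his.
  + by have := h2 i; rewrite his.
  + by have := h4 i; rewrite his.
  + by have -> : i = s by apply: val_inj.
- move/forallP => h.
  have hs := h s; rewrite /ok ltnn eqxx in hs.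
  apply/and3P; split => //.
  + apply/andP; split; first by rewrite (eqP hs).
    apply/forallP => j; apply/implyP => hj.
    by have := h j; rewrite /ok hj.
  + apply/forallP => j; apply/implyP => hj.
    have := h j; rewrite /ok ltnNge (ltnW hj) /=.
    by rewrite (gtn_eqF hj).
Qed.

Lemma ok_uniq (k n : nat) (hk : (0 < k)%N) (f : mults n) (s s' : 'I_n) :
  [forall i : 'I_n, ok k s i (f i)] -> [forall i : 'I_n, ok k s' i (f i)] -> s = s'.
Proof.
move=> /forallP h /forallP h'.
have hs := h s; have hs' := h' s'.
rewrite /ok ltnn eqxx in hs; rewrite /ok ltnn eqxx in hs'.
case: (ltngtP s s') => e.
- have := h' s; rewrite /ok e (eqP hs) /= => k0; move: hk; by rewrite (eqP k0).
- have := h s'; rewrite /ok e (eqP hs') /= => k0; move: hk; by rewrite (eqP k0).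
- exact: val_inj.
Qed.

Lemma card_split (k n : nat) (hk : (0 < k)%N) : sptkd k n = \sum_(s < n) #|Aset k n s|.
Proof.
rewrite /sptkd -sum1_card.
under [RHS]eq_bigr => s _ do rewrite -sum1_card big_mkcond /=.
rewrite exchange_big big_mkcond /=; apply: eq_bigr => f _.
case: (boolP (f \in Sptkd k n)) => hf.
- move: (hf); rewrite inE => /andP[hw /existsP[s0 hs0]].
  rewrite (cond_eq _ _ hk) in hs0.
  rewrite (bigD1 s0) //= inE hw hs0 /= big1 // => s hs.
  rewrite inE; case: (boolP (_ && _)) => // /andP[_ hs'].
  by rewrite (@ok_uniq k n hk f s s0 hs' hs0) eqxx in hs.
- rewrite big1 // => s _; rewrite inE; case: (boolP (_ && _)) => // /andP[hw hs'].
  move: hf; rewrite inE hw /=; case/existsP; exists s; by rewrite (cond_eq _ _ hk).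
Qed.

Local Open Scope ring_scope.

Definition Qp (n t : nat) : {poly int} := \prod_(t <= j < n) (1 + 'X^(j.+1)).
Definition Gp (k n : nat) : {poly int} :=
  \sum_(t < n) 'X^(t.+1 * k) * Qp n t.+1.

Lemma Qp_n n : Qp n n = 1.
Proof. by rewrite /Qp big_geq. Qed.

Lemma Qp_S n t : (t < n)%N -> Qp n t = (1 + 'X^(t.+1)) * Qp n t.+1.
Proof. by move=> h; rewrite /Qp big_ltn. Qed.

Lemma Qp_0 n : Qp n 0 = mq_poch n.
Proof. by rewrite /Qp big_mkord. Qed.

Lemma Gp_rec k n : (0 < n)%N ->
  Gp k.+1 n = ('X^k - 1) * Gp k n + 'X^k * mq_poch n - 'X^(n.+1 * k).
Proof.
move=> hn.
have e1 : Gp k.+1 n = \sum_(t < n) 'X^(t.+1 * k) * Qp n t - Gp k n.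
  rewrite /Gp -sumrB; apply: eq_bigr => t _.
  rewrite (@Qp_S n t (ltn_ord t)) mulnS exprD.
  ring.
have e2 : \sum_(t < n) 'X^(t * k) * Qp n t = mq_poch n + Gp k n - 'X^(n * k).
  case: n hn {e1} => // n _.
  rewrite big_ord_recl /= mul0n expr0 mul1r Qp_0 /Gp big_ord_recr /= Qp_n mulr1.
  rewrite -addrA; congr (_ + _).
  have -> : \sum_(i < n) 'X^(bump 0 i * k) * Qp n.+1 (bump 0 i) =
            \sum_(i < n) 'X^(i.+1 * k) * Qp n.+1 i.+1 by [].
  ring.
have e3 : \sum_(t < n) 'X^(t.+1 * k) * Qp n t =
          'X^k * \sum_(t < n) 'X^(t * k) * Qp n t.
  rewrite mulr_sumr; apply: eq_bigr => t _; by rewrite mulSn exprD mulrA.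
rewrite e1 e3 e2 mulSn exprD; ring.
Qed.

Lemma Gp1 n : (0 < n)%N -> Gp 1 n = mq_poch n - 1.
Proof.
move=> hn; have := @Gp_rec 0 n hn; rewrite !expr0 subrr mul0r add0r mul1r muln0 expr0.
done.
Qed.

Lemma Gp_closed k n : (0 < n)%N -> (0 < k)%N -> exists E : {poly int},
  Gp k n = Ppoly k * mq_poch n + (-1) ^+ k * qq_poch k.-1 + 'X^(n.+1) * E.
Proof.
move=> hn; elim: k => // k IH _.
case: k IH => [_|k IH].
  exists 0; rewrite Gp1 // /= /qq_poch big_ord0; ring.
have [E hE] := IH isT.
exists (('X^(k.+1) - 1) * E - 'X^(n.+1 * k)).
rewrite (@Gp_rec k.+1 n hn) hE.
have -> : Ppoly k.+2 = ('X^(k.+1) - 1) * Ppoly k.+1 + 'X^(k.+1) by [].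
rewrite [qq_poch k.+2.-1]/qq_poch big_ord_recr -/(qq_poch k) /= mulnS exprD.
rewrite [(-1) ^+ k.+2]exprS.
move: (Ppoly k.+1) (qq_poch k) (mq_poch n) => P Q M.
ring.
Qed.

Lemma coef_sign k (Q : {poly int}) i : ((-1) ^+ k * Q)`_i = (-1) ^+ k * Q`_i.
Proof.
elim: k => [|k IH]; first by rewrite !expr0 !mul1r.
by rewrite !exprS -!mulrA !mulN1r coefN IH.
Qed.

Lemma Gp_coef k n : (0 < n)%N -> (0 < k)%N ->
  (Gp k n)`_n = (Ppoly k * mq_poch n)`_n + (-1) ^+ k * (qq_poch k.-1)`_n.
Proof.
move=> hn hk; have [E ->] := @Gp_closed k n hn hk.
by rewrite !coefD coefXnM ltnSn addr0 coef_sign.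
Qed.

Lemma Ppoly0 k : (Ppoly k.+1)`_0 = (-1) ^+ k.
Proof.
elim: k => [|k IH]; first by rewrite /= coef1.
have -> : Ppoly k.+2 = ('X^(k.+1) - 1) * Ppoly k.+1 + 'X^(k.+1) by [].
by rewrite coefD coef0M IH coefB coefXn coef1 /= sub0r exprS mulN1r addr0.
Qed.

Lemma qq0 k : (qq_poch k)`_0 = 1.
Proof.
elim: k => [|k IH]; first by rewrite /qq_poch big_ord0 coef1.
by rewrite /qq_poch big_ord_recr /= coef0M -/(qq_poch k) IH coefB coef1 coefXn subr0 mulr1.
Qed.

Lemma case0 k : (0 < k)%N ->
  0 = (Ppoly k * mq_poch 0)`_0 + (-1) ^+ k * (qq_poch k.-1)`_0.
Proof.
case: k => // k _.
by rewrite /mq_poch big_ord0 mulr1 Ppoly0 qq0 mulr1 exprS mulN1r addrN.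
Qed.

Definition Fp (k n : nat) (s i : 'I_n) (j : 'I_n.+1) : {poly int} :=
  if ok k s i j then 'X^(i.+1 * j) else 0.

Lemma card_coef (k n : nat) (s : 'I_n) :
  (#|Aset k n s|)%:Z = (\prod_(i < n) \sum_(j < n.+1) Fp k n s i j)`_n.
Proof.
rewrite bigA_distr_bigA /= coef_sum.
have e : forall f : {ffun 'I_n -> 'I_n.+1},
    (\prod_i Fp k n s i (f i))`_n = if f \in Aset k n s then 1 else 0.
  move=> f; rewrite inE.
  case: (boolP [forall i : 'I_n, ok k s i (f i)]) => h.
  - rewrite (eq_bigr (fun i : 'I_n => 'X^(i.+1 * f i))); last first.
      by move=> i _; rewrite /Fp (forallP h i).
    rewrite prodrXr coefXn andbT /weight eq_sym; by case: eqP.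
  - case/forallPn: h => i hi.
    by rewrite (bigD1 i) //= /Fp (negbTE hi) mul0r coef0 andbF.
rewrite (eq_bigr _ (fun f _ => e f)) -big_mkcond /= sumr_const.
by rewrite -natz.
Qed.

Lemma sumF (k n : nat) (s i : 'I_n) :
  \sum_(j < n.+1) Fp k n s i j =
  if (i < s)%N then 1 else if (i == s :> nat) then
    (if (k < n.+1)%N then 'X^(s.+1 * k) else 0) else 1 + 'X^(i.+1).
Proof.
have hn : (0 < n)%N by case: i => i /= /(leq_ltn_trans (leq0n i)).
case: ltngtP => his.
- rewrite (bigD1 ord0) //= big1 => [|j hj].
    by rewrite /Fp /ok his eqxx muln0 expr0 addr0.
  rewrite /Fp /ok his; case: eqP => // hj0; case/eqP: hj; exact: val_inj.
- rewrite (bigD1 ord0) //= (bigD1 (Ordinal (hn : (1 < n.+1)%N))) //= big1 => [|j /andP[hj0 hj1]].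
    rewrite /Fp /ok ltnNge (ltnW his) /= (gtn_eqF his) /= muln0 muln1 expr0 addr0.
    done.
  rewrite /Fp /ok ltnNge (ltnW his) /= (gtn_eqF his) /=.
  case: j hj0 hj1 => [[|[|j]] hj] //=.
- have -> : i = s by apply: val_inj.
  rewrite /=.
  case: (ltnP k n.+1) => hkn.
    rewrite (bigD1 (Ordinal hkn)) //= big1 => [|j hj].
      by rewrite /Fp /ok ?ltnn ?eqxx /= ?eqxx addr0.
    rewrite /Fp /ok ?ltnn ?eqxx /=; case: eqP => // hj0; case/eqP: hj; exact: val_inj.
  rewrite big1 // => j _; rewrite /Fp /ok ?ltnn ?eqxx /=.
  case: eqP => // hj0; move: (ltn_ord j); rewrite hj0 ltnNge hkn //.
Qed.

Lemma prodF (k n : nat) (s : 'I_n) :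
  (\prod_(i < n) \sum_(j < n.+1) Fp k n s i j)`_n = ('X^(s.+1 * k) * Qp n s.+1)`_n.
Proof.
set c : {poly int} := if (k < n.+1)%N then 'X^(s.+1 * k) else 0.
pose Hf (i : nat) : {poly int} :=
  if (i < s)%N then 1 else if i == s then c else 1 + 'X^(i.+1).
rewrite (eq_bigr (fun i : 'I_n => Hf i)); last by move=> i _; rewrite sumF.
rewrite -(big_mkord xpredT Hf) (@big_cat_nat _ _ _ s 0 n _ Hf (leq0n s) (ltnW (ltn_ord s))) /=.
rewrite big_nat_cond big1 => [|i /andP[/andP[_ hi] _]]; last by rewrite /Hf hi.
rewrite mul1r big_ltn //.
rewrite {1}/Hf ltnn eqxx.
rewrite (eq_big_nat _ _ (F2 := fun j => 1 + 'X^(j.+1))); last first.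
  move=> i /andP[hi _]; by rewrite /Hf ltnNge (ltnW hi) /= (gtn_eqF hi).
rewrite -/(Qp n s.+1) /c.
case: ltnP => hkn //.
rewrite mul0r coef0 coefXnM.
have -> : (n < s.+1 * k)%N by apply: leq_trans hkn (leq_pmull _ _).
done.
Qed.

Theorem theorem1 (k : nat) (hk : (0 < k)%N) (n : nat) :
  ((if n == 0%N then 0%N else sptkd k n)%:Z : int) =
    (Ppoly k * mq_poch n)`_n + (-1) ^+ k * (qq_poch k.-1)`_n.
Proof.
case: n => [|n]; first exact: case0.
rewrite /= -(@Gp_coef k n.+1 isT hk) (@card_split k n.+1 hk) -natz natr_sum /Gp coef_sum.
apply: eq_bigr => s _; by rewrite natz card_coef prodF.
Qed.
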